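(* Let $\Gamma_2(t)=\mathbb{A}(t)+\varepsilon^*\mathbb{A}^*(t)$ be a differentiable curve in the unit hyper-dual sphere $\mathbb{S}^2_{\mathbb{D}_2}$, with $\mathbb{A}=\mathbf a_0+\varepsilon\mathbf a_1$ and $\mathbb{A}^*=\mathbf a_2+\varepsilon\mathbf a_3$ ($\mathbf a_i(t)\in\mathbb{R}^3$). Let $\Phi_2(t,\mathbb{U})=\mathbb{A}(t)\times\mathbb{A}^*(t)+\mathbb{U}\,\mathbb{A}(t)$, $\mathbb{U}\in D$, be its corresponding ruled surface in $\mathbb{D}$. Then $\Phi_2$ is developable if and only if, for all $t$, $$\mathbf a_0'\cdot\mathbf a_2'=0\quad\text{and}\quad \mathbf a_0'\cdot\mathbf a_3'=-\mathbf a_1'\cdot\mathbf a_2'.$$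
   Context: Dual numbers $D=\{a+\varepsilon a^*\}$, $\varepsilon^2=0$, $\varepsilon\ne0$. Dual vectors $\mathbb{D}=\{\mathbf a+\varepsilon\mathbf a^*:\mathbf a,\mathbf a^*\in\mathbb{R}^3\}$ with $D$-valued inner product $\langle\mathbf a+\varepsilon\mathbf a^*,\mathbf b+\varepsilon\mathbf b^*\rangle=\mathbf a\cdot\mathbf b+\varepsilon(\mathbf a^*\cdot\mathbf b+\mathbf a\cdot\mathbf b^* )$, cross product $(\mathbf a+\varepsilon\mathbf a^* )\times(\mathbf b+\varepsilon\mathbf b^* )=\mathbf a\times\mathbf b+\varepsilon(\mathbf a\times\mathbf b^*+\mathbf a^*\times\mathbf b)$, scalar multiplication by dual numbers $(u+\varepsilon u^* )(\mathbf a+\varepsilon\mathbf a^* )=u\mathbf a+\varepsilon(u\mathbf a^*+u^*\mathbf a)$, and dual determinant $\det(X,Y,Z)=\langle X,Y\times Z\rangle$. Hyper-dual vectors $\mathbb{D}_2=\{\mathbb{A}+\varepsilon^*\mathbb{A}^*:\mathbb{A},\mathbb{A}^*\in\mathbb{D}\}$ with $\varepsilon^{*2}=0$, $\varepsilon\varepsilon^*=\varepsilon^*\varepsilon\ne0$. Unit hyper-dual sphere: $\mathbb{S}^2_{\mathbb{D}_2}=\{\mathbb{A}+\varepsilon^*\mathbb{A}^*:\langle\mathbb{A},\mathbb{A}\rangle=1,\ \langle\mathbb{A},\mathbb{A}^*\rangle=0\}$. A ruled surface in $\mathbb{D}$ is $\Phi(t,\mathbb{U})=\mathbb{B}(t)+\mathbb{U}\,\mathbb{B}^*(t)$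 with $\mathbb{B},\mathbb{B}^*$ curves in $\mathbb{D}$ and $\mathbb{U}\in D$; it is called developable if $\det(\mathbb{B}'(t),\mathbb{B}^*(t),\mathbb{B}^{*\prime}(t))=0$ (as a dual number) for all $t$. Derivatives are componentwise. *)

(* Defs.v *)
From Stdlib Require Import Reals.
From Coquelicot Require Import Coquelicot.
Open Scope R_scope.

Record V3 := mkV3 { vx : R; vy : R; vz : R }.

Definition dot (a b : V3) : R := vx a * vx b + vy a * vy b + vz a * vz b.
Definition cross (a b : V3) : V3 :=
  mkV3 (vy a * vz b - vz a * vy b)
       (vz a * vx b - vx a * vz b)
       (vx a * vy b - vy a * vx b).
Definition vadd (a b : V3) : V3 := mkV3 (vx a + vx b) (vy a + vy b) (vz a + vz b).
Definition vscal (c : R) (a : V3) : V3 := mkV3 (c * vx a) (c * vy a) (c * vz a).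

(* Dual numbers u + eps u*, eps^2 = 0 *)
Record DN := mkDN { dre : R; ddu : R }.

(* Dual vectors a + eps a* *)
Record DV := mkDV { re : V3; du : V3 }.

Definition ddot (A B : DV) : DN :=
  mkDN (dot (re A) (re B)) (dot (du A) (re B) + dot (re A) (du B)).
Definition dcross (A B : DV) : DV :=
  mkDV (cross (re A) (re B)) (vadd (cross (re A) (du B)) (cross (du A) (re B))).
Definition dscal (u : DN) (A : DV) : DV :=
  mkDV (vscal (dre u) (re A)) (vadd (vscal (dre u) (du A)) (vscal (ddu u) (re A))).
Definition dvadd (A B : DV) : DV := mkDV (vadd (re A) (re B)) (vadd (du A) (du B)).
Definition ddet (X Y Z : DV) : DN := ddot X (dcross Y Z).

Definition V3_differentiable (f : R -> V3) : Prop :=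
  forall t, ex_derive (fun s => vx (f s)) t /\ ex_derive (fun s => vy (f s)) t
            /\ ex_derive (fun s => vz (f s)) t.
Definition V3_derive (f : R -> V3) (t : R) : V3 :=
  mkV3 (Derive (fun s => vx (f s)) t) (Derive (fun s => vy (f s)) t)
       (Derive (fun s => vz (f s)) t).
Definition DV_derive (F : R -> DV) (t : R) : DV :=
  mkDV (V3_derive (fun s => re (F s)) t) (V3_derive (fun s => du (F s)) t).

Definition ruled_surface (B Bs : R -> DV) (t : R) (U : DN) : DV :=
  dvadd (B t) (dscal U (Bs t)).

Definition developable (B Bs : R -> DV) : Prop :=
  forall t, ddet (DV_derive B t) (Bs t) (DV_derive Bs t) = mkDN 0 0.

(* Hyper-dual vector A + eps* A*, and the unit hyper-dual sphere *)
Record HDV := mkHDV { hre : DV; hdu : DV }.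
Definition on_hyperdual_sphere (G : HDV) : Prop :=
  ddot (hre G) (hre G) = mkDN 1 0 /\ ddot (hre G) (hdu G) = mkDN 0 0.

(* Main.v *)
Require Import Defs.
From Stdlib Require Import Reals Lra.
From Coquelicot Require Import Coquelicot.
Open Scope R_scope.

Lemma Dmul2 (f g : R -> R) t : ex_derive f t -> ex_derive g t ->
  is_derive (fun s => f s * g s) t (Derive f t * g t + f t * Derive g t).
Proof. intros Hf Hg.
    apply (is_derive_mult f g t (Derive f t) (Derive g t)); try apply Derive_correct; auto.
  intros; apply Rmult_comm.
Qed.

Lemma Dplus (f g : R -> R) t a b : is_derive f t a -> is_derive g t b ->
  is_derive (fun s => f s + g s) t (a + b).
Proof. intros; exact (is_derive_plus f g t a b H H0). Qed.
Lemma Dminus (f g : R -> R) t a b : is_derive f t a -> is_derive g t b ->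
  is_derive (fun s => f s - g s) t (a - b).
Proof. intros; exact (is_derive_minus f g t a b H H0). Qed.

Lemma Ddot (f g : R -> V3) t : V3_differentiable f -> V3_differentiable g ->
  is_derive (fun s => dot (f s) (g s)) t (dot (V3_derive f t) (g t) + dot (f t) (V3_derive g t)).
Proof.
  intros Hf Hg. destruct (Hf t) as (?&?&?). destruct (Hg t) as (?&?&?).
  unfold dot, V3_derive; simpl.
    replace (_ + _) with ((Derive (fun s => vx (f s)) t * vx (g t) + vx (f t) * Derive (fun s => vx (g s)) t
   + (Derive (fun s => vy (f s)) t * vy (g t) + vy (f t) * Derive (fun s => vy (g s)) t))
   + (Derive (fun s => vz (f s)) t * vz (g t) + vz (f t) * Derive (fun s => vz (g s)) t)) by ring.
  apply Dplus; [apply Dplus|]; 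
  first [ apply (Dmul2 (fun s => vx (f s)) (fun s => vx (g s)))
        | apply (Dmul2 (fun s => vy (f s)) (fun s => vy (g s)))
        | apply (Dmul2 (fun s => vz (f s)) (fun s => vz (g s)))]; auto.
Qed.


Lemma Dcomp (f g : R -> V3) (p q r w : V3 -> R) t :
  ex_derive (fun s => p (f s)) t -> ex_derive (fun s => q (g s)) t ->
  ex_derive (fun s => r (f s)) t -> ex_derive (fun s => w (g s)) t ->
  is_derive (fun s => p (f s) * q (g s) - r (f s) * w (g s)) t
   ((Derive (fun s => p (f s)) t * q (g t) + p (f t) * Derive (fun s => q (g s)) t)
   - (Derive (fun s => r (f s)) t * w (g t) + r (f t) * Derive (fun s => w (g s)) t)).
Proof. intros. apply Dminus;
  [apply (Dmul2 (fun s => p (f s)) (fun s => q (g s))) | apply (Dmul2 (fun s => r (f s)) (fun s => w (g s)))]; auto.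
Qed.

Lemma Dcross (f g : R -> V3) t : V3_differentiable f -> V3_differentiable g ->
  is_derive (fun s => vx (cross (f s) (g s))) t (vx (vadd (cross (V3_derive f t) (g t)) (cross (f t) (V3_derive g t))))
  /\ is_derive (fun s => vy (cross (f s) (g s))) t (vy (vadd (cross (V3_derive f t) (g t)) (cross (f t) (V3_derive g t))))
  /\ is_derive (fun s => vz (cross (f s) (g s))) t (vz (vadd (cross (V3_derive f t) (g t)) (cross (f t) (V3_derive g t)))).
Proof.
  intros Hf Hg. destruct (Hf t) as (?&?&?). destruct (Hg t) as (?&?&?).
  unfold cross, vadd, V3_derive; simpl. split; [|split].
  - match goal with |- is_derive _ _ ?l => replace l with
   ((Derive (fun s => vy (f s)) t * vz (g t) + vy (f t) * Derive (fun s => vz (g s)) t)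
   - (Derive (fun s => vz (f s)) t * vy (g t) + vz (f t) * Derive (fun s => vy (g s)) t)) by ring end.
    apply (Dcomp f g vy vz vz vy); auto.
  - match goal with |- is_derive _ _ ?l => replace l with
   ((Derive (fun s => vz (f s)) t * vx (g t) + vz (f t) * Derive (fun s => vx (g s)) t)
   - (Derive (fun s => vx (f s)) t * vz (g t) + vx (f t) * Derive (fun s => vz (g s)) t)) by ring end.
    apply (Dcomp f g vz vx vx vz); auto.
  - match goal with |- is_derive _ _ ?l => replace l with
   ((Derive (fun s => vx (f s)) t * vy (g t) + vx (f t) * Derive (fun s => vy (g s)) t)
   - (Derive (fun s => vy (f s)) t * vx (g t) + vy (f t) * Derive (fun s => vx (g s)) t)) by ring end.
    apply (Dcomp f g vx vy vy vx); auto.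
Qed.

Lemma V3_derive_cross (f g : R -> V3) t : V3_differentiable f -> V3_differentiable g ->
  V3_derive (fun s => cross (f s) (g s)) t = vadd (cross (V3_derive f t) (g t)) (cross (f t) (V3_derive g t)).
Proof.
  intros Hf Hg. destruct (Dcross f g t Hf Hg) as (?&?&?).
  set (v := vadd _ _) in *. transitivity (mkV3 (vx v) (vy v) (vz v)).
  - unfold V3_derive at 1. f_equal; apply is_derive_unique; assumption.
  - destruct v; reflexivity.
Qed.

Lemma cross_diff (f g : R -> V3) : V3_differentiable f -> V3_differentiable g ->
  V3_differentiable (fun s => cross (f s) (g s)).
Proof.
  intros Hf Hg t. destruct (Dcross f g t Hf Hg) as (?&?&?).
  repeat split; eexists; eassumption.
Qed.

Lemma V3_derive_vadd (f g : R -> V3) t : V3_differentiable f -> V3_differentiable g ->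
  V3_derive (fun s => vadd (f s) (g s)) t = vadd (V3_derive f t) (V3_derive g t).
Proof.
  intros Hf Hg. destruct (Hf t) as (?&?&?). destruct (Hg t) as (?&?&?).
  unfold V3_derive, vadd; simpl. f_equal; apply Derive_plus; auto.
Qed.

Definition dmul (u v : DN) := mkDN (dre u * dre v) (dre u * ddu v + ddu u * dre v).
Definition dsub (u v : DN) := mkDN (dre u - dre v) (ddu u - ddu v).
Definition dadd (u v : DN) := mkDN (dre u + dre v) (ddu u + ddu v).

Lemma lagrange X Y Z W : ddot (dcross X Y) (dcross Z W) =
  dsub (dmul (ddot X Z) (ddot Y W)) (dmul (ddot X W) (ddot Y Z)).
Proof.
  destruct X as [[] []], Y as [[] []], Z as [[] []], W as [[] []].
  unfold ddot, dcross, dsub, dmul, dot, cross, vadd; simpl. f_equal; ring.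
Qed.

Lemma ddot_add X Y Z : ddot (dvadd X Y) Z = dadd (ddot X Z) (ddot Y Z).
Proof.
  destruct X as [[] []], Y as [[] []], Z as [[] []].
  unfold ddot, dvadd, dadd, dot, vadd; simpl. f_equal; ring.
Qed.

Lemma ddot_sym X Y : ddot X Y = ddot Y X.
Proof.
  destruct X as [[] []], Y as [[] []].
  unfold ddot, dot; simpl. f_equal; ring.
Qed.

Lemma dot_sym a b : dot a b = dot b a.
Proof. unfold dot; ring. Qed.

Lemma const_deriv (h : R -> R) c t : (forall s, h s = c) -> forall l, is_derive h t l -> l = 0.
Proof.
  intros Hc l Hl. rewrite <- (is_derive_unique _ _ _ Hl).
  rewrite (Derive_ext h (fun _ => c)) by auto. apply Derive_const.
Qed.

Theorem proposition1 (a0 a1 a2 a3 : R -> V3) :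
  V3_differentiable a0 -> V3_differentiable a1 ->
  V3_differentiable a2 -> V3_differentiable a3 ->
  (forall t, on_hyperdual_sphere (mkHDV (mkDV (a0 t) (a1 t)) (mkDV (a2 t) (a3 t)))) ->
  let A := fun t => mkDV (a0 t) (a1 t) in
  let As := fun t => mkDV (a2 t) (a3 t) in
  (* Phi_2(t,U) = A x A* + U A, i.e. ruled_surface B Bs with B = A x A*, Bs = A *)
  developable (fun t => dcross (A t) (As t)) A <->
  (forall t, dot (V3_derive a0 t) (V3_derive a2 t) = 0 /\
             dot (V3_derive a0 t) (V3_derive a3 t) =
               - dot (V3_derive a1 t) (V3_derive a2 t)).
Proof.
  intros H0 H1 H2 H3 HS A As.
  assert (Key : forall t, ddet (DV_derive (fun t => dcross (A t) (As t)) t) (A t) (DV_derive A t)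
     = mkDN (dot (V3_derive a0 t) (V3_derive a2 t))
            (dot (V3_derive a1 t) (V3_derive a2 t) + dot (V3_derive a0 t) (V3_derive a3 t))).
  { intro t.
    assert (EB : DV_derive (fun t => dcross (A t) (As t)) t =
      dvadd (dcross (DV_derive A t) (As t)) (dcross (A t) (DV_derive As t))).
    { unfold DV_derive, A, As, dcross, dvadd; simpl.
      rewrite V3_derive_cross by auto.
      rewrite V3_derive_vadd by (apply cross_diff; auto).
      rewrite !V3_derive_cross by auto.
      f_equal. destruct (V3_derive a0 t), (V3_derive a1 t), (V3_derive a2 t), (V3_derive a3 t),
        (a0 t), (a1 t), (a2 t), (a3 t). unfold vadd, cross; simpl. f_equal; ring. }
    destruct (HS t) as [S1 S2]. simpl in S1, S2.
    assert (Ha00 : dot (a0 t) (V3_derive a0 t) = 0).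
    { assert (Hd := Ddot a0 a0 t H0 H0).
      apply const_deriv with (c := 1) in Hd.
      - rewrite dot_sym in Hd. lra.
      - intro s. destruct (HS s) as [S _]. unfold ddot in S; simpl in S. congruence. }
    assert (Ha01 : dot (a1 t) (V3_derive a0 t) + dot (a0 t) (V3_derive a1 t) = 0).
    { assert (Hd := Dplus _ _ t _ _ (Ddot a1 a0 t H1 H0) (Ddot a0 a1 t H0 H1)).
      assert (Hc : forall s, dot (a1 s) (a0 s) + dot (a0 s) (a1 s) = 0).
      { intro s. destruct (HS s) as [S _]. unfold ddot in S; simpl in S. congruence. }
      apply (const_deriv _ 0 t Hc) in Hd.
      rewrite (dot_sym (V3_derive a1 t)), (dot_sym (a1 t)) in Hd. rewrite (dot_sym (a1 t)). lra. }
    unfold ddet. rewrite EB, ddot_add, !lagrange.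
    rewrite (ddot_sym (DV_derive A t) (A t)), (ddot_sym (DV_derive As t) (A t)),
       (ddot_sym (As t) (A t)).
    unfold A at 1 2 3 4 5 6 7 8 9 10. unfold As at 1 2 3.
    rewrite S1, S2. unfold DV_derive, ddot, dadd, dsub, dmul; simpl.
    change (fun s : R => a0 s) with a0; change (fun s : R => a1 s) with a1; change (fun s : R => a2 s) with a2; change (fun s : R => a3 s) with a3. rewrite Ha00, Ha01.
    f_equal; rewrite ?(dot_sym (V3_derive a2 t)), ?(dot_sym (V3_derive a3 t)); ring. }
  unfold developable. split.
  - intros HD t. specialize (HD t). rewrite Key in HD. injection HD; intros. split; lra.
  - intros HC t. rewrite Key. destruct (HC t) as [E1 E2]. f_equal; lra.
Qed.
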